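(* Let a game belong to the class $\mathcal P$ with parameters $w$ and $\gamma>0$, $w>-(I-1)\gamma$, and set $p=\gamma/(w+\gamma I)$. If $0<\varepsilon<\bar\varepsilon$ then for every information tree $\mathcal T$, $$\max_{\sigma\in\mathcal E(\mathcal T)}\mathbb P_{\mathcal T}[a_i=1\ \forall i\mid\sigma]=\begin{cases}1&\text{if }p\le q_1,\\ \rho(1-\varepsilon)^I&\text{if }q_1<p\le q_2,\\ 0&\text{if }p>q_2,\end{cases}$$ where $q_1=\rho\varepsilon/(1-\rho(1-\varepsilon))$ and $q_2=(1-\varepsilon)^{I-1}$.
   Context: Model. Fix an integer $I\ge2$, agents $\mathcal I=\{1,\dots,I\}$, a prior $\rho\in(0,1)$ and a loss probability $\varepsilon\in(0,1)$. A state of nature $\theta\in\{g,b\}$ has $\Pr(\theta=g)=\rho$. A forest on $\mathcal I$ is a collection of vertex-disjoint undirected trees whose vertex sets partition $\mathcal I$; a seeding chooses exactly one vertex (seed) of each tree. The pair $\mathcal T$ (forest, seeding) is an information tree: orient each tree away from its seed and add a root $0$ (the planner) with an arc from $0$ to each seed. If $\theta=b$ no messages are sent. If $\theta=g$ the planner sends a message along each arc from $0$, and every agent who receives a message forwards it along every arc leaving her. Each transmission is lost independently with probability $\varepsilon$. Agent $i$ observes only $x_i\in\{y,n\}$ (received / not); $\mathbb P_{\mathcal T}$ is the induced probability. $\bar\varepsilon$ is the unique $\varepsilon\in(0,1)$ with $q_1=q_2$. Class $\mathcal P$: symmetric $I$-player games in which each $i$ chooses $a_i\in\{0,1\}$,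 payoffs $u^\theta_i(a_i,\mathbf a_{-i})$ depend on $\theta$, $a_i$ and $\sum_{j\ne i}a_j$, and for each $\theta$ there is a potential $v^\theta$ with $u^\theta_i(a_i,\mathbf a_{-i})-u^\theta_i(a_i',\mathbf a_{-i})=v^\theta(a_i,\mathbf a_{-i})-v^\theta(a_i',\mathbf a_{-i})$ for all $i,a_i,a_i',\mathbf a_{-i}$, where $v^g(\mathbf a)=w$ if $\sum_ja_j=I$, $v^g(\mathbf a)=-\gamma\sum_ja_j$ if $\sum_ja_j<I$, and $v^b(\mathbf a)=-\gamma\sum_ja_j$. Each agent chooses $a_i$ knowing only $x_i$; $\mathcal E(\mathcal T)$ is the set of (mixed) Bayesian Nash equilibria. *)

(* Defs.v *)
From HB Require Import structures.
From mathcomp Require Import all_boot all_order all_algebra.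
From mathcomp Require Import reals.
Set Implicit Arguments. Unset Strict Implicit. Unset Printing Implicit Defensive.
Import Order.TTheory GRing.Theory Num.Theory.
Local Open Scope ring_scope.

(* Conventions:
   - agents are 'I_I (agent i+1 of the paper is the ordinal i);
   - the state theta : bool, with true = g (good) and false = b (bad);
   - an action profile is a : {ffun 'I_I -> bool} (true = action 1);
   - an information tree (forest + seeding, oriented away from the seeds,
     with planner root 0) is encoded by its parent map
     par : 'I_I -> option 'I_I  (None = parent is the planner 0, i.e. the
     agent is a seed); it must be acyclic;
   - a loss pattern l : {ffun 'I_I -> bool}: l j = true iff the transmission
     along the unique arc entering j is lost (each agent has exactly one
     incoming arc). *)

Section Model.
Variable R : realType.
Variable I : nat.

Definition profile := {ffun 'I_I -> bool}.
Definition losses := {ffun 'I_I -> bool}.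

(* parent map describes a rooted forest (every agent reaches the planner) *)
Definition info_tree (par : 'I_I -> option 'I_I) : Prop :=
  forall i : 'I_I, iter I (fun o => obind par o) (Some i) = None.

(* j is i or an ancestor of i *)
Definition anc (par : 'I_I -> option 'I_I) (i j : 'I_I) : bool :=
  [exists k : 'I_I, iter k (fun o => obind par o) (Some i) == Some j].

(* x_i = y  iff  theta = g and no arc on the path from 0 to i lost the message *)
Definition received (par : 'I_I -> option 'I_I) (th : bool) (l : losses)
  (i : 'I_I) : bool :=
  th && [forall j, anc par i j ==> ~~ l j].

Definition lossprob (eps : R) (l : losses) : R :=
  \prod_(j : 'I_I) (if l j then eps else 1 - eps).

Definition prior (rho : R) (th : bool) : R := if th then rho else 1 - rho.

(* mixed strategy: sigma i x = probability that agent i plays 1 after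
   observing x (x = true means "y", received) *)
Definition strategy := 'I_I -> bool -> R.

Definition pact (s : R) (b : bool) : R := if b then s else 1 - s.

Definition weight (rho eps : R) (par : 'I_I -> option 'I_I)
  (sigma : strategy) (th : bool) (l : losses) (a : profile) : R :=
  prior rho th * lossprob eps l *
  \prod_(j : 'I_I) pact (sigma j (received par th l j)) (a j).

Definition others (a : profile) (i : 'I_I) : nat :=
  (\sum_(j : 'I_I | j != i) (a j : nat))%N.

(* expected utility of agent i; u th ai k = payoff given state th, own action
   ai and number k of other agents playing 1 (symmetric game) *)
Definition EU (rho eps : R) (par : 'I_I -> option 'I_I)
  (u : bool -> bool -> nat -> R) (sigma : strategy) (i : 'I_I) : R :=
  \sum_(th : bool) \sum_(l : losses) \sum_(a : profile)
     weight rho eps par sigma th l a * u th (a i) (others a i).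

Definition deviate (sigma : strategy) (i : 'I_I) (tau : bool -> R) : strategy :=
  fun j => if j == i then tau else sigma j.

Definition is_mixed (tau : bool -> R) : Prop := forall x, 0 <= tau x <= 1.

Definition is_BNE (rho eps : R) (par : 'I_I -> option 'I_I)
  (u : bool -> bool -> nat -> R) (sigma : strategy) : Prop :=
  (forall j, is_mixed (sigma j)) /\
  forall (i : 'I_I) (tau : bool -> R), is_mixed tau ->
    EU rho eps par u (deviate sigma i tau) i <= EU rho eps par u sigma i.

Definition prob_all1 (rho eps : R) (par : 'I_I -> option 'I_I)
  (sigma : strategy) : R :=
  \sum_(th : bool) \sum_(l : losses) \sum_(a : profile)
     weight rho eps par sigma th l a * (if [forall j, a j] then 1 else 0).

Definition vpot (w gamma : R) (th : bool) (a : profile) : R :=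
  let s := (\sum_(j : 'I_I) (a j : nat))%N in
  if th && (s == I) then w else - (gamma * s%:R).

Definition setp (a : profile) (i : 'I_I) (b : bool) : profile :=
  [ffun j => if j == i then b else a j].

Definition inClassP (w gamma : R) (u : bool -> bool -> nat -> R) : Prop :=
  forall (th : bool) (a : profile) (i : 'I_I) (b b' : bool),
    u th b (others a i) - u th b' (others a i) =
    vpot w gamma th (setp a i b) - vpot w gamma th (setp a i b').

Definition q1 (rho eps : R) : R := rho * eps / (1 - rho * (1 - eps)).
Definition q2 (eps : R) : R := (1 - eps) ^+ I.-1.

End Model.

(* Main.v *)
Require Import Defs.
From HB Require Import structures.
From mathcomp Require Import all_boot all_order all_algebra.
From mathcomp Require Import reals ring lra zify.
Set Implicit Arguments. Unset Strict Implicit. Unset Printing Implicit Defensive.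
Import Order.TTheory GRing.Theory Num.Theory.
Local Open Scope ring_scope.

Section Aux.
Variable R : realType.
Variable I : nat.

Definition ind (b : bool) : R := if b then 1 else 0.

Lemma sum_ffun_prod (G : 'I_I -> bool -> R) :
  \sum_(f : {ffun 'I_I -> bool}) \prod_j G j (f j) = \prod_j (G j true + G j false).
Proof. by rewrite -bigA_distr_bigA; apply: eq_bigr => j _; rewrite big_bool. Qed.

Lemma flip_sum (G : {ffun 'I_I -> bool} -> R) i :
  \sum_(a : {ffun 'I_I -> bool}) G a = \sum_(a : {ffun 'I_I -> bool} | a i) (G a + G (setp a i false)).
Proof.
rewrite (bigID (fun a : {ffun 'I_I -> bool} => a i)) /= big_split /=; congr (_ + _).
pose h (a : {ffun 'I_I -> bool}) := setp a i (~~ a i).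
have hK : involutive h.
  move=> a; apply/ffunP => j; rewrite /h /setp !ffunE eqxx.
  by case: eqP => [->|_]; rewrite ?negbK.
rewrite (reindex_inj (inv_inj hK)) /=.
apply: eq_big => [a|a ai]; first by rewrite /h /setp ffunE eqxx negbK.
have ai' : a i by move: ai; rewrite /h /setp ffunE eqxx negbK.
by rewrite /h ai'.
Qed.


Definition Pi (s : 'I_I -> R) (i : 'I_I) (a : {ffun 'I_I -> bool}) : R :=
  \prod_(j | j != i) pact (s j) (a j).

Lemma prod_split s i (a : {ffun 'I_I -> bool}) : a i ->
  \prod_j pact (s j) (a j) = s i * Pi s i a.
Proof. by move=> ai; rewrite (bigD1 i) //= ai. Qed.

Lemma prod_split_false s i (a : {ffun 'I_I -> bool}) : a i ->
  \prod_j pact (s j) (setp a i false j) = (1 - s i) * Pi s i a.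
Proof.
move=> ai; rewrite (bigD1 i) //= /setp ffunE eqxx; congr (_ * _).
by apply: eq_bigr => j /negbTE ji; rewrite ffunE ji.
Qed.

Lemma others_setp (a : {ffun 'I_I -> bool}) i c : others (setp a i c) i = others a i.
Proof. by apply: eq_bigr => j /negbTE ji; rewrite /setp ffunE ji. Qed.

Lemma sum_Pi s i : \sum_(a : {ffun 'I_I -> bool} | a i) Pi s i a = 1.
Proof.
have h := sum_ffun_prod (fun j b => pact (s j) b).
rewrite (flip_sum _ i) in h.
have h1 : \prod_j (pact (s j) true + pact (s j) false) = 1.
  by rewrite big1 // => j _ /=; rewrite /pact; ring.
rewrite h1 in h; rewrite -h; apply: eq_bigr => a ai.
by rewrite (prod_split s ai) (prod_split_false s ai); ring.
Qed.

Definition ones : {ffun 'I_I -> bool} := [ffun => true].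

Lemma sum_Pi_all s i : \sum_(a : {ffun 'I_I -> bool} | a i) Pi s i a * ind [forall j, a j]
   = \prod_(j | j != i) s j.
Proof.
rewrite (bigD1 ones) /=; last by rewrite ffunE.
rewrite big1 ?addr0.
  rewrite /ind; have -> : [forall j, ones j] by apply/forallP => j; rewrite ffunE.
  by rewrite mulr1 /Pi; apply: eq_bigr => j _; rewrite ffunE.
move=> a /andP[_ an]; rewrite /ind; case: forallP => [h|]; last by rewrite mulr0.
by exfalso; move/eqP: an; apply; apply/ffunP => j; rewrite ffunE h.
Qed.

Lemma inner s i (F : bool -> nat -> R) :
  \sum_(a : {ffun 'I_I -> bool}) (\prod_j pact (s j) (a j)) * F (a i) (others a i)
  = \sum_(a : {ffun 'I_I -> bool} | a i) Pi s i a *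
      (s i * F true (others a i) + (1 - s i) * F false (others a i)).
Proof.
rewrite (flip_sum _ i); apply: eq_bigr => a ai.
rewrite (prod_split s ai) (prod_split_false s ai) others_setp ai /setp ffunE eqxx; ring.
Qed.

Lemma sum_setp (a : {ffun 'I_I -> bool}) i c :
  (\sum_j (setp a i c j : nat) = others a i + c)%N.
Proof.
rewrite (bigD1 i) //= /setp ffunE eqxx addnC; congr (_ + _)%N.
by apply: eq_bigr => j /negbTE ji; rewrite ffunE ji.
Qed.

Lemma sum_all (b : {ffun 'I_I -> bool}) :
  (\sum_j (b j : nat) == I)%N = [forall j, b j].
Proof.
have e : (\sum_j (b j : nat) + \sum_j (~~ b j : nat) = I)%N.
  rewrite -big_split /= -[X in _ = X]card_ord -sum1_card.
  by apply: eq_bigr => j _; case: (b j).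
have -> : [forall j, b j] = (\sum_j (~~ b j : nat) == 0)%N.
  rewrite sum_nat_eq0; apply/forallP/forallP => h j; move: (h j); by case: (b j).
apply/eqP/eqP; lia.
Qed.

Lemma delta w gamma u (hu : inClassP I w gamma u) th (a : {ffun 'I_I -> bool}) i :
  a i -> u th true (others a i) - u th false (others a i) =
   - gamma + ind (th && [forall j, a j]) * (w + gamma * I%:R).
Proof.
move=> ai; rewrite hu /vpot !sum_setp.
have sa : setp a i true = a by apply/ffunP => j; rewrite ffunE; case: eqP => // ->.
have -> : (others a i + false == I)%N = false.
  apply/negbTE; rewrite -(sum_setp a i false) sum_all; apply/negP => /forallP/(_ i).
  by rewrite ffunE eqxx.
have e1 : (others a i + true == I)%N = [forall j, a j] by rewrite -sum_setp sa sum_all.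
rewrite andbF e1 /ind.
case: th => /=; last by rewrite natrD; ring.
case: forallP => h; last by rewrite natrD; ring.
have eN : (others a i + 1 = I)%N by apply/eqP; rewrite e1; apply/forallP.
have eI := congr1 (fun n : nat => (n%:R : R)) eN; rewrite /= natrD in eI.
rewrite -eI addn0; ring.
Qed.

End Aux.

Section EUsec.
Variable R : realType.
Variable I : nat.
Variable par : 'I_I -> option 'I_I.
Variables rho eps w gamma : R.
Variable u : bool -> bool -> nat -> R.
Hypothesis hu : inClassP I w gamma u.

Definition sv (sig : strategy R I) th l : 'I_I -> R :=
  fun j => sig j (received par th l j).

Definition KK : R := w + gamma * I%:R.

Lemma ind_and a b : ind R (a && b) = ind R a * ind R b.
Proof. by case: a; case: b; rewrite /ind ?mulr1 ?mulr0 ?mul0r. Qed.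

Lemma EU_tl (sig : strategy R I) th (l : losses I) i :
  \sum_(a : {ffun 'I_I -> bool}) weight rho eps par sig th l a * u th (a i) (others a i)
  = prior rho th * lossprob eps l *
    (\sum_(a : {ffun 'I_I -> bool} | a i) Pi (sv sig th l) i a * u th false (others a i)
     + sv sig th l i * (- gamma + ind R th * KK * \prod_(j | j != i) sv sig th l j)).
Proof.
rewrite /weight (eq_bigr (fun a : {ffun 'I_I -> bool} => prior rho th * lossprob eps l *
  (\prod_j pact (sig j (received par th l j)) (a j) * u th (a i) (others a i))));
  last by move=> a _; rewrite mulrA.
rewrite -mulr_sumr; congr (_ * _).
have := inner (sv sig th l) i (u th); rewrite /sv => ->.
have e : forall a : {ffun 'I_I -> bool},
   Pi (sv sig th l) i a * (sig i (received par th l i) * u th true (others a i) +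
      (1 - sig i (received par th l i)) * u th false (others a i))
   = Pi (sv sig th l) i a * u th false (others a i) + sig i (received par th l i) *
      (Pi (sv sig th l) i a * (u th true (others a i) - u th false (others a i))).
  by move=> a; ring.
rewrite /sv in e; rewrite (eq_bigr _ (fun a _ => e a)).
rewrite big_split /= -mulr_sumr; congr (_ + _ * _).
have e2 : forall a : {ffun 'I_I -> bool}, a i ->
   Pi (sv sig th l) i a * (u th true (others a i) - u th false (others a i))
   = - gamma * Pi (sv sig th l) i a + ind R th * KK *
      (Pi (sv sig th l) i a * ind R [forall j, a j]).
  by move=> a ai; rewrite (delta hu) // ind_and /KK; ring.
rewrite /sv in e2; rewrite (eq_bigr _ e2) big_split /= -!mulr_sumr.
by have := sum_Pi (sv sig th l) i; have := sum_Pi_all (sv sig th l) i; rewrite /sv => -> ->; rewrite mulr1.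
Qed.

Definition Dv (sig : strategy R I) i x : R :=
  \sum_(th : bool) \sum_(l : losses I) prior rho th * lossprob eps l *
     ind R (received par th l i == x) *
     (- gamma + ind R th * KK * \prod_(j | j != i) sv sig th l j).

Lemma EU_diff (sig : strategy R I) i tau :
  EU rho eps par u (deviate sig i tau) i - EU rho eps par u sig i =
  (tau true - sig i true) * Dv sig i true + (tau false - sig i false) * Dv sig i false.
Proof.
rewrite /EU /Dv !mulr_sumr -big_split -sumrB /=; apply: eq_bigr => th _.
rewrite !mulr_sumr -big_split -sumrB /=; apply: eq_bigr => l _.
rewrite !EU_tl.
have ePi : forall a, Pi (sv (deviate sig i tau) th l) i a * u th false (others a i)
     = Pi (sv sig th l) i a * u th false (others a i).
  by move=> a; congr (_ * _); apply: eq_bigr => j /negbTE hj; rewrite /sv /deviate hj.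
rewrite (eq_bigr _ (fun a _ => ePi a)).
have ePr : \prod_(j | j != i) sv (deviate sig i tau) th l j = \prod_(j | j != i) sv sig th l j.
  by apply: eq_bigr => j /negbTE hj; rewrite /sv /deviate hj.
rewrite ePr /sv /deviate eqxx.
by case: (received par th l i); rewrite /ind /=; ring.
Qed.

End EUsec.

Section Loss.
Variable R : realType.
Variable I : nat.
Variable eps : R.

Lemma prod_ind (P : 'I_I -> bool) : \prod_j ind R (P j) = ind R [forall j, P j].
Proof.
rewrite /ind; case: forallP => h.
  by rewrite big1 // => j _; rewrite h.
have [j /negbTE hj] : exists j, ~~ P j.
  by apply/existsP; rewrite -negb_forall; apply/forallP.
by rewrite (bigD1 j) //= hj mul0r.
Qed.

Lemma sum_loss_gen (H : 'I_I -> bool -> R) :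
  \sum_(l : losses I) lossprob eps l * \prod_j H j (l j)
  = \prod_j (eps * H j true + (1 - eps) * H j false).
Proof.
rewrite -(sum_ffun_prod (fun j b => (if b then eps else 1 - eps) * H j b)).
by apply: eq_bigr => l _; rewrite /lossprob -big_split.
Qed.

Lemma sum_loss : \sum_(l : losses I) lossprob eps l = 1.
Proof.
have := sum_loss_gen (fun _ _ => 1).
rewrite [X in _ = X]big1 => [|j _]; last by rewrite !mulr1 addrC subrK.
move=> <-; apply: eq_bigr => l _; by rewrite big1 ?mulr1.
Qed.

Lemma sum_loss_lost i : \sum_(l : losses I) lossprob eps l * ind R (l i) = eps.
Proof.
have h := sum_loss_gen (fun j b => if j == i then ind R b else 1).
have e1 : \prod_j (eps * (fun j b => if j == i then ind R b else 1) j true +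
     (1 - eps) * (fun j b => if j == i then ind R b else 1) j false) = eps.
  rewrite (bigD1 i) //= eqxx /ind big1; first by ring.
  by move=> j ji; rewrite (negbTE ji); ring.
rewrite e1 in h; rewrite -[RHS]h; apply: eq_bigr => l _.
rewrite (bigD1 i) //= eqxx big1 ?mulr1 // => j ji.
by rewrite (negbTE ji).
Qed.

Lemma sum_loss_kept i : \sum_(l : losses I) lossprob eps l * ind R (~~ l i) = 1 - eps.
Proof.
rewrite -[X in _ = X - _]sum_loss -[X in _ = _ - X](sum_loss_lost i) -sumrB.
apply: eq_bigr => l _.
by rewrite /ind; case: (l i) => /=; ring.
Qed.

Lemma sum_loss_none :
  \sum_(l : losses I) lossprob eps l * ind R [forall j, ~~ l j] = (1 - eps) ^+ I.
Proof.
have h := sum_loss_gen (fun j b => ind R (~~ b)).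
have e1 : \prod_(j < I) (eps * (fun j b => ind R (~~ b)) j true +
     (1 - eps) * (fun j b => ind R (~~ b)) j false) = (1 - eps) ^+ I.
  rewrite (eq_bigr (fun _ => 1 - eps)); first by rewrite prodr_const card_ord.
  by move=> j _; rewrite /ind /=; ring.
rewrite e1 in h; rewrite -[RHS]h; apply: eq_bigr => l _.
by rewrite prod_ind.
Qed.

End Loss.

Section Tree.
Variable I : nat.
Variable par : 'I_I -> option 'I_I.
Local Notation f := (fun o => obind par o).

Lemma iter_None n : iter n f None = None.
Proof. by elim: n => //= n ->. Qed.

Lemma anc_self i : anc par i i.
Proof.
have I0 : (0 < I)%N := leq_ltn_trans (leq0n _) (ltn_ord i).
by apply/existsP; exists (Ordinal I0).
Qed.

Lemma seed_anc s j : par s = None -> anc par s j -> j = s.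
Proof.
move=> ps /existsP[[k kI] /eqP] /=; case: k kI => [|k] _; first by case.
by rewrite iterSr /= ps iter_None.
Qed.


Lemma exists_seed_aux n : forall i : 'I_I, iter n f (Some i) = None -> exists s, par s = None.
Proof.
elim: n => [|n IH] i //; rewrite iterSr /=.
case e : (par i) => [j|]; last by exists i.
by apply: IH.
Qed.

Lemma anc_lower n i j : iter n.+1 f (Some i) = None -> anc par i j -> j != i ->
  iter n f (Some j) = None.
Proof.
move=> hn /existsP[[k kI] /eqP /= hk] ji.
case: k kI hk => [|k] _ hk; first by move: ji; case: hk => ->; rewrite eqxx.
have e : (n + k.+1 = (k + n.+1))%N by lia.
by rewrite -hk -iterD e iterD hn iter_None.
Qed.

Lemma rec_anc th l i j : received par th l i -> anc par i j -> ~~ l j.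
Proof. by move=> /andP[_ /forallP h] aij; move: (h j); rewrite aij. Qed.

Lemma rec_self th l i : received par th l i -> ~~ l i.
Proof. by move=> h; apply: rec_anc h (anc_self i). Qed.

Lemma rec_false l i : received par false l i = false.
Proof. by []. Qed.

Lemma rec_lost l i : ~~ received par true l i ->
  (forall j, anc par i j -> j != i -> ~~ l j) -> l i.
Proof.
move=> nr h; apply/negPn/negP => nli; move/negP: nr; apply.
apply/forallP => j; apply/implyP => aij.
by case: (eqVneq j i) => [->|ji] //; apply: h.
Qed.

Lemma rec_all (l : losses I) : [forall j, ~~ l j] -> forall i, received par true l i.
Proof. by move=> /forallP h i; apply/forallP => j; rewrite h implybT. Qed.

Lemma rec_seed s l : par s = None -> received par true l s = ~~ l s.
Proof.
move=> ps; apply/idP/idP; first exact: rec_self.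
move=> nl; apply/forallP => j; apply/implyP => /(seed_anc ps) ->; exact: nl.
Qed.

End Tree.

Section Main.
Variable R : realType.
Variable I : nat.
Variable par : 'I_I -> option 'I_I.
Variables rho eps w gamma : R.
Variable u : bool -> bool -> nat -> R.
Hypothesis hu : inClassP I w gamma u.
Hypothesis heps : 0 < eps < 1.
Hypothesis hrho : 0 < rho < 1.

Lemma lossprob_ge0 (l : losses I) : 0 <= lossprob eps l.
Proof.
case/andP: heps => e0 e1.
by apply: prodr_ge0 => j _; case: (l j); lra.
Qed.

Lemma ind_ge0 b : 0 <= ind R b. Proof. by rewrite /ind; case: b. Qed.
Lemma ind_le1 b : ind R b <= 1. Proof. by rewrite /ind; case: b. Qed.

Lemma prod_zero (F : 'I_I -> R) (P : pred 'I_I) j : P j -> F j = 0 -> \prod_(k | P k) F k = 0.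
Proof. by move=> Pj Fj; rewrite (bigD1 j) //= Fj mul0r. Qed.

Lemma prod01 (F : 'I_I -> R) (P : pred 'I_I) : (forall j, 0 <= F j <= 1) ->
  0 <= \prod_(k | P k) F k <= 1.
Proof.
move=> h; apply/andP; split; first by apply: prodr_ge0 => j _; case/andP: (h j).
by apply: prodr_ile1 => j _; apply: h.
Qed.

Lemma sum_a_all (sig : strategy R I) th l :
  \sum_(a : {ffun 'I_I -> bool}) weight rho eps par sig th l a * (if [forall j, a j] then 1 else 0)
  = prior rho th * lossprob eps l * \prod_j sv par sig th l j.
Proof.
rewrite (bigD1 (ones I)) //=.
have -> : [forall j, ones I j] by apply/forallP => j; rewrite ffunE.
rewrite big1 ?addr0.
  rewrite mulr1 /weight; congr (_ * _); apply: eq_bigr => j _; by rewrite ffunE.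
move=> a an; case: forallP => h; last by rewrite mulr0.
by exfalso; move/eqP: an; apply; apply/ffunP => j; rewrite ffunE h.
Qed.

Lemma prob_eq (sig : strategy R I) : prob_all1 rho eps par sig =
  rho * \sum_(l : losses I) lossprob eps l * \prod_j sv par sig true l j
  + (1 - rho) * \prod_j sig j false.
Proof.
rewrite /prob_all1 big_bool /=; congr (_ + _).
  rewrite mulr_sumr; apply eq_bigr => l _; by rewrite sum_a_all /= mulrA.
rewrite (eq_bigr (fun l => (1 - rho) * (lossprob eps l * \prod_j sig j false))).
  by rewrite -mulr_sumr -mulr_suml sum_loss mul1r.
by move=> l _; rewrite sum_a_all /= mulrA.
Qed.

Definition PrX i x : R := \sum_(th : bool) \sum_(l : losses I)
   prior rho th * lossprob eps l * ind R (received par th l i == x).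

Definition GG (sig : strategy R I) i x : R := \sum_(l : losses I)
   lossprob eps l * ind R (received par true l i == x) * \prod_(j | j != i) sv par sig true l j.

Lemma Dv_eq sig i x : Dv par rho eps w gamma sig i x =
   - gamma * PrX i x + KK I w gamma * rho * GG sig i x.
Proof.
rewrite /Dv /PrX /GG !big_bool /= -!big_split /= !mulr_sumr -big_split /=.
apply: eq_bigr => l _; rewrite /ind /KK /=; ring.
Qed.

Lemma PrX_true i : PrX i true = rho * \sum_(l : losses I) lossprob eps l * ind R (received par true l i).
Proof.
rewrite /PrX big_bool /= [X in _ + X]big1 ?addr0.
  by rewrite mulr_sumr; apply: eq_bigr => l _; rewrite mulrA eqb_id.
by move=> l _; rewrite /ind /= mulr0.
Qed.

Lemma PrX_false i : PrX i false =
  (1 - rho) + rho * \sum_(l : losses I) lossprob eps l * ind R (~~ received par true l i).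
Proof.
rewrite /PrX big_bool /= addrC; congr (_ + _).
  rewrite (eq_bigr (fun l => (1 - rho) * lossprob eps l)); first by rewrite -mulr_sumr sum_loss mulr1.
  by move=> l _; rewrite /ind /= mulr1.
rewrite mulr_sumr; apply: eq_bigr => l _; rewrite mulrA; congr (_ * ind R _).
by case: (received par true l i).
Qed.

Lemma PrX_false_ge i : 1 - rho * (1 - eps) <= PrX i false.
Proof.
rewrite PrX_false.
have : eps <= \sum_(l : losses I) lossprob eps l * ind R (~~ received par true l i).
  rewrite -[X in X <= _](sum_loss_lost eps i); apply: ler_sum => l _.
  apply: (ler_wpM2l (lossprob_ge0 l)).
  rewrite /ind; case e: (l i); last by case: (~~ _).
  case r: (received par true l i); last by [].
  by move: (rec_self r); rewrite e.
case/andP: hrho => r0 r1; move=> h; nra.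
Qed.

Lemma PrX_true_le i : PrX i true <= rho * (1 - eps).
Proof.
rewrite PrX_true; case/andP: hrho => r0 r1.
apply: ler_wpM2l; first lra.
rewrite -[X in _ <= X](sum_loss_kept eps i); apply: ler_sum => l _.
apply: (ler_wpM2l (lossprob_ge0 l)).
rewrite /ind; case r: (received par true l i) => //; last by case: (~~ _).
by rewrite (rec_self r).
Qed.

Lemma PrX_true_seed s : par s = None -> PrX s true = rho * (1 - eps).
Proof.
move=> ps; rewrite PrX_true -[X in _ = _ * X](sum_loss_kept eps s); congr (_ * _).
by apply: eq_bigr => l _; rewrite rec_seed.
Qed.

Definition mixedS (sig : strategy R I) := forall j, is_mixed (sig j).

Lemma GG_false_le sig i : mixedS sig ->
  (forall j, anc par i j -> j != i -> sig j false = 0) -> GG sig i false <= eps.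
Proof.
move=> hm h0; rewrite /GG -[X in _ <= X](sum_loss_lost eps i); apply: ler_sum => l _.
rewrite -mulrA; apply: (ler_wpM2l (lossprob_ge0 l)).
have p01 : 0 <= \prod_(j | j != i) sv par sig true l j <= 1.
  by apply: prod01 => j; apply: hm.
case r: (received par true l i) => /=.
  by rewrite /ind /= mul0r; apply: ind_ge0.
case li: (l i).
  by rewrite /ind /= mul1r; case/andP: p01.
case: (boolP [exists j, [&& anc par i j, j != i & l j]]) => [/existsP[j /and3P[aij ji lj]]|hn].
  rewrite (prod_zero (j:=j)) ?mulr0 ?ind_ge0 // /sv.
  have -> : received par true l j = false.
    by apply/negbTE/negP => rj; move: (rec_self rj); rewrite lj.
  exact: h0.
exfalso; move: li; rewrite (rec_lost (negbT r)) //.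
move=> j aij ji; move/existsPn: hn => /(_ j); rewrite aij ji /=; exact.
Qed.

Lemma GG_true_le sig i : mixedS sig -> (forall j, sig j false = 0) ->
  GG sig i true <= (1 - eps) ^+ I.
Proof.
move=> hm h0; rewrite /GG -[X in _ <= X](@sum_loss_none R I eps); apply: ler_sum => l _.
rewrite -mulrA; apply: (ler_wpM2l (lossprob_ge0 l)).
have p01 : 0 <= \prod_(j | j != i) sv par sig true l j <= 1.
  by apply: prod01 => j; apply: hm.
case: (boolP [forall j, ~~ l j]) => hall.
  rewrite [ind R true]/ind.
  apply: (@le_trans _ _ (1 * 1)); last by rewrite mulr1.
  by case/andP: p01 => p0 p1; apply: ler_pM => //; [exact: ind_ge0| exact: ind_le1].
rewrite [ind R false]/ind.
move: hall; rewrite negb_forall => /existsP[j /negPn lj].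
case: (eqVneq j i) => [ji|ji].
  have -> : received par true l i = false.
    by apply/negbTE/negP => ri; move: (rec_self ri); rewrite -ji lj.
  by rewrite /ind /= mul0r.
rewrite (prod_zero (j:=j)) ?mulr0 // /sv.
have -> : received par true l j = false.
  by apply/negbTE/negP => rj; move: (rec_self rj); rewrite lj.
exact: h0.
Qed.

Lemma B_ge i : eps <= \sum_(l : losses I) lossprob eps l * ind R (~~ received par true l i).
Proof.
rewrite -[X in X <= _](sum_loss_lost eps i); apply: ler_sum => l _.
apply: (ler_wpM2l (lossprob_ge0 l)).
rewrite /ind; case e: (l i); last by case: (~~ _).
case r: (received par true l i); last by [].
by move: (rec_self r); rewrite e.
Qed.

Lemma S_ge0 (F : losses I -> bool) : 0 <= \sum_(l : losses I) lossprob eps l * ind R (F l).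
Proof. by apply: sumr_ge0 => l _; apply: mulr_ge0; [exact: lossprob_ge0| exact: ind_ge0]. Qed.

Lemma PrX_ge0 i x : 0 <= PrX i x.
Proof.
apply: sumr_ge0 => th _; apply: sumr_ge0 => l _.
apply: mulr_ge0; last exact: ind_ge0.
apply: mulr_ge0; last exact: lossprob_ge0.
case/andP: hrho => r0 r1; rewrite /prior; case: th; lra.
Qed.

Lemma BNE_zero sig i x : is_BNE rho eps par u sig ->
  Dv par rho eps w gamma sig i x < 0 -> sig i x = 0.
Proof.
move=> [hm hbr]; case/andP: (hm i x) => s0 s1.
case: x s0 s1 => s0 s1 hD;
 [pose tau := fun y : bool => if y then 0 else sig i y
 |pose tau := fun y : bool => if y then sig i y else 0];
 (have mt : is_mixed tau by move=> y; rewrite /tau; case: y; rewrite ?lexx ?ler01 //; apply: hm);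
 have := hbr i tau mt; rewrite -subr_le0 (EU_diff par rho eps hu) /tau /=;
 rewrite subrr mul0r ?addr0 ?add0r => h; nra.
Qed.

Lemma BNE_pure (sig : strategy R I) : (forall j x, sig j x = 0 \/ sig j x = 1) ->
  (forall i x, sig i x = 1 -> 0 <= Dv par rho eps w gamma sig i x) ->
  (forall i x, sig i x = 0 -> Dv par rho eps w gamma sig i x <= 0) ->
  is_BNE rho eps par u sig.
Proof.
move=> h01 h1 h0; split.
  by move=> j x; case: (h01 j x) => ->; rewrite ?lexx ?ler01.
move=> i tau mt; rewrite -subr_le0 (EU_diff par rho eps hu).
have key : forall x, (tau x - sig i x) * Dv par rho eps w gamma sig i x <= 0.
  move=> x; case/andP: (mt x) => t0 t1; case: (h01 i x) => e.
    by have := h0 _ _ e; rewrite e; nra.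
  by have := h1 _ _ e; rewrite e; nra.
by have := key true; have := key false; lra.
Qed.

Lemma prod_le_none (sig : strategy R I) l : mixedS sig -> (forall j, sig j false = 0) ->
  \prod_j sv par sig true l j <= ind R [forall j, ~~ l j].
Proof.
move=> hm h0.
have p01 : 0 <= \prod_j sv par sig true l j <= 1 by apply: prod01 => j; apply: hm.
case: (boolP [forall j, ~~ l j]) => hall; first by rewrite /ind; case/andP: p01.
move: hall; rewrite negb_forall => /existsP[j /negPn lj].
rewrite (prod_zero (j:=j)) // ?/ind // /sv.
have -> : received par true l j = false.
  by apply/negbTE/negP => rj; move: (rec_self rj); rewrite lj.
exact: h0.
Qed.

Hypothesis hg : 0 < gamma.
Hypothesis hw : - (I.-1%:R * gamma) < w.
Hypothesis hI : (2 <= I)%N.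

Lemma K_gt : gamma < KK I w gamma.
Proof.
have I0 : (0 < I)%N by lia.
have eI : I%:R = I.-1%:R + 1 :> R by rewrite natr1 prednK.
rewrite /KK eI mulrDr mulr1 mulrC; have := hw; move: (I.-1%:R * gamma) => x hx; lra.
Qed.

Lemma K_pos : 0 < KK I w gamma.
Proof. exact: lt_trans hg K_gt. Qed.

Lemma other_agent (i : 'I_I) : exists j : 'I_I, j != i.
Proof.
have h0 : (0 < I)%N by lia.
have h1 : (1 < I)%N by lia.
case: (eqVneq (Ordinal h0) i) => e; last by exists (Ordinal h0).
by exists (Ordinal h1); rewrite -e.
Qed.

Lemma an_agent : exists j : 'I_I, true.
Proof. have h0 : (0 < I)%N by lia. by exists (Ordinal h0). Qed.

Lemma cond_q1 : (gamma / KK I w gamma <= q1 rho eps) =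
  (gamma * (1 - rho * (1 - eps)) <= rho * eps * KK I w gamma).
Proof.
have hd : 0 < 1 - rho * (1 - eps) by case/andP: hrho; case/andP: heps => *; nra.
by rewrite /q1 ler_pdivrMr ?K_pos // mulrAC ler_pdivlMr.
Qed.

Lemma cond_q2 : (gamma / KK I w gamma <= q2 I eps) =
  (gamma <= (1 - eps) ^+ I.-1 * KK I w gamma).
Proof. by rewrite /q2 ler_pdivrMr ?K_pos. Qed.

Lemma exprI : (1 - eps) ^+ I = (1 - eps) * (1 - eps) ^+ I.-1.
Proof. by rewrite -exprS prednK //; lia. Qed.

Lemma texp_ge0 n : 0 <= (1 - eps) ^+ n.
Proof. by apply: exprn_ge0; case/andP: heps => *; lra. Qed.

Lemma exist1 : gamma / KK I w gamma <= q1 rho eps ->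
  exists sig : strategy R I, is_BNE rho eps par u sig /\ prob_all1 rho eps par sig = 1.
Proof.
have hg0 := hg.
rewrite cond_q1 => hq.
exists (fun _ _ => 1); split; last first.
  rewrite prob_eq (eq_bigr (fun l => lossprob eps l)); last by move=> l _; rewrite big1 ?mulr1.
  by rewrite sum_loss big1 //; ring.
apply: BNE_pure => [j x|i x _|i x]; [by right| |by move=> e; exfalso; move: (@oner_neq0 R); rewrite e eqxx].
rewrite Dv_eq.
have eG : forall x, GG (fun _ _ => 1) i x =
   \sum_(l : losses I) lossprob eps l * ind R (received par true l i == x).
  by move=> y; apply: eq_bigr => l _; rewrite big1 ?mulr1.
rewrite eG; have := K_gt; case/andP: hrho => r0 r1; case/andP: heps => e0 e1.
case: x.
  have eT : \sum_(l : losses I) lossprob eps l * ind R (received par true l i == true)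
     = \sum_(l : losses I) lossprob eps l * ind R (received par true l i).
    by apply: eq_bigr => l _; rewrite eqb_id.
  rewrite PrX_true eT => hk; have := S_ge0 (fun l => received par true l i).
  move: (KK I w gamma) hk => K hk.
  move: (\sum_(l : losses I) _) => S hS.
  have hS' : 0 <= rho * S by apply: mulr_ge0 => //; lra.
  nra.
have eF : \sum_(l : losses I) lossprob eps l * ind R (received par true l i == false)
   = \sum_(l : losses I) lossprob eps l * ind R (~~ received par true l i).
  by apply: eq_bigr => l _; case: (received par true l i).
rewrite PrX_false eF => hk; have := B_ge i.
move: (KK I w gamma) hk hq => K hk hq.
move: (\sum_(l : losses I) _) => B hB.
have h1 : 0 <= rho * (B - eps) by apply: mulr_ge0; lra.
have h2 : 0 <= (K - gamma) * (rho * (B - eps)) by apply: mulr_ge0; lra.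
nra.
Qed.

Lemma exist2 : ~~ (gamma / KK I w gamma <= q1 rho eps) -> gamma / KK I w gamma <= q2 I eps ->
  exists sig : strategy R I, is_BNE rho eps par u sig /\
     prob_all1 rho eps par sig = rho * (1 - eps) ^+ I.
Proof.
have hg0 := hg.
rewrite cond_q1 cond_q2 -ltNge => hq1 hq2.
have [j0 _] := an_agent.
pose sig : strategy R I := fun _ x => ind R x.
have hm : mixedS sig by move=> j x; rewrite /sig /ind; case: x; rewrite ?lexx ?ler01.
have h0 : forall j, sig j false = 0 by [].
exists sig; split; last first.
  rewrite prob_eq (prod_zero (j:=j0)) // mulr0 addr0; congr (_ * _).
  rewrite -(@sum_loss_none R I eps); apply: eq_bigr => l _; congr (_ * _).
  rewrite /sv /sig prod_ind; congr (ind R _).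
  apply/forallP/forallP => h j; first exact: (rec_self (h j)).
  by apply: rec_all; apply/forallP.
have := K_gt; case/andP: hrho => r0 r1; case/andP: heps => e0 e1 hk.
apply: BNE_pure => [j x|i x|i x].
- by rewrite /sig /ind; case: x; [right|left].
- case: x; last by rewrite /sig /ind => /eqP; rewrite eq_sym oner_eq0.
  move=> _; rewrite Dv_eq.
  have hG : (1 - eps) ^+ I <= GG sig i true.
    rewrite /GG -[X in X <= _](@sum_loss_none R I eps); apply: ler_sum => l _.
    rewrite -mulrA; apply: (ler_wpM2l (lossprob_ge0 l)).
    case: (boolP [forall j, ~~ l j]) => hall; last first.
      rewrite [ind R false]/ind; apply: mulr_ge0; first exact: ind_ge0.
      by apply: prodr_ge0 => j _; apply: ind_ge0.
    have ra := rec_all par hall.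
    rewrite (ra i) /ind /= big1 ?mulr1 // => j _; by rewrite /sv /sig ra.
  have := PrX_true_le i; rewrite exprI in hG * => hP.
  have := texp_ge0 I.-1.
  move: (KK I w gamma) hk hq2 => K hk hq2.
  move: (GG sig i true) (PrX i true) hG hP => G P hG hP.
  move: ((1 - eps) ^+ I.-1) hG hq2 => T hG hq2 hT.
  have h1 : 0 <= K * rho * (G - (1 - eps) * T) by apply: mulr_ge0; [apply: mulr_ge0|]; lra.
  have h2 : 0 <= gamma * (rho * (1 - eps) - P) by apply: mulr_ge0; lra.
  have h3 : 0 <= rho * (1 - eps) * (T * K - gamma) by apply: mulr_ge0; [apply: mulr_ge0|]; lra.
  nra.
- case: x; first by rewrite /sig /ind => /eqP; rewrite oner_eq0.
  move=> _; rewrite Dv_eq.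
  have := GG_false_le (i:=i) hm (fun j _ _ => h0 j).
  have := PrX_false_ge i.
  move: (KK I w gamma) hk hq1 => K hk hq1.
  move: (GG sig i false) (PrX i false) => G P hP hG.
  have h1 : 0 <= K * rho * (eps - G) by apply: mulr_ge0; [apply: mulr_ge0|]; lra.
  have h2 : 0 <= gamma * (P - (1 - rho * (1 - eps))) by apply: mulr_ge0; lra.
  nra.
Qed.

Lemma exist3 : exists sig : strategy R I, is_BNE rho eps par u sig /\
     prob_all1 rho eps par sig = 0.
Proof.
have hg0 := hg.
have [j0 _] := an_agent.
exists (fun _ _ => 0); split; last first.
  rewrite prob_eq.
  have z : forall F : 'I_I -> R, (forall j, F j = 0) -> \prod_j F j = 0.
    by move=> F hF; rewrite (bigD1 j0) //= hF mul0r.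
  rewrite [X in _ + _ * X]z // mulr0 addr0.
  rewrite (eq_bigr (fun _ => 0)) ?big1 ?mulr0 // => l _.
  by rewrite z ?mulr0.
apply: BNE_pure => [j x|i x|i x]; [by left| by move=> /eqP; rewrite eq_sym oner_eq0|].
move=> _; rewrite Dv_eq.
have [j ji] := other_agent i.
rewrite /GG big1 ?mulr0 ?addr0 => [|l _]; last by rewrite (prod_zero (j:=j)) ?mulr0.
have := PrX_ge0 i x; nra.
Qed.

Lemma up1 sig : is_BNE rho eps par u sig -> prob_all1 rho eps par sig <= 1.
Proof.
case=> hm _; rewrite prob_eq.
have h1 : \sum_(l : losses I) lossprob eps l * \prod_j sv par sig true l j <= 1.
  rewrite -[X in _ <= X](@sum_loss R I eps); apply: ler_sum => l _.
  rewrite -[X in _ <= X]mulr1; apply: (ler_wpM2l (lossprob_ge0 l)).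
  have p01 : 0 <= \prod_j sv par sig true l j <= 1 by apply: prod01 => j; apply: hm.
  by case/andP: p01.
have h2 : \prod_j sig j false <= 1.
  have p01 : 0 <= \prod_j sig j false <= 1 by apply: prod01 => j; apply: hm.
  by case/andP: p01.
case/andP: hrho => r0 r1; nra.
Qed.

Lemma allfalse sig : info_tree par -> ~~ (gamma / KK I w gamma <= q1 rho eps) ->
  is_BNE rho eps par u sig -> forall j, sig j false = 0.
Proof.
have hg0 := hg.
rewrite cond_q1 -ltNge => ht hq hb.
have hm : mixedS sig by case: hb.
suff H : forall n (i : 'I_I), iter n (fun o => obind par o) (Some i) = None -> sig i false = 0.
  by move=> j; apply: (H I); apply: ht.
elim=> [|n IH] i // hn.
apply: (BNE_zero hb); rewrite Dv_eq.
have := GG_false_le (i:=i) hm (fun j aij ji => IH j (anc_lower hn aij ji)).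
have := PrX_false_ge i; have := K_pos; case/andP: hrho => r0 r1.
case/andP: heps => e0 e1.
move: (KK I w gamma) hq => K hq hK.
move: (GG sig i false) (PrX i false) => G P hP hG.
have h1 : 0 <= K * rho * (eps - G) by apply: mulr_ge0; [apply: mulr_ge0|]; lra.
have h2 : 0 <= gamma * (P - (1 - rho * (1 - eps))) by apply: mulr_ge0; lra.
nra.
Qed.

Lemma up2 sig : is_BNE rho eps par u sig -> (forall j, sig j false = 0) ->
  prob_all1 rho eps par sig <= rho * (1 - eps) ^+ I.
Proof.
move=> hb h0; have hm : mixedS sig by case: hb.
have [j0 _] := an_agent.
rewrite prob_eq (prod_zero (j:=j0)) // mulr0 addr0.
case/andP: hrho => r0 r1; apply: ler_wpM2l; first lra.
rewrite -[X in _ <= X](@sum_loss_none R I eps); apply: ler_sum => l _.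
by apply: (ler_wpM2l (lossprob_ge0 l)); apply: prod_le_none.
Qed.

Lemma up3 sig : info_tree par -> ~~ (gamma / KK I w gamma <= q2 I eps) ->
  is_BNE rho eps par u sig -> (forall j, sig j false = 0) ->
  prob_all1 rho eps par sig <= 0.
Proof.
have hg0 := hg.
rewrite cond_q2 -ltNge => ht hq hb h0; have hm : mixedS sig by case: hb.
have [j0 _] := an_agent.
have [s ps] := exists_seed_aux (ht j0).
have hs : sig s true = 0.
  apply: (BNE_zero hb); rewrite Dv_eq (PrX_true_seed ps).
  have := GG_true_le s hm h0; rewrite exprI => hG.
  case/andP: hrho => r0 r1; case/andP: heps => e0 e1.
  have := texp_ge0 I.-1; have := K_pos.
  move: (KK I w gamma) hq hG => K hq hG hK.
  move: (GG sig s true) hG => G hG.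
  move: ((1 - eps) ^+ I.-1) hq hG => T hq hG hT.
  have h1 : 0 <= K * rho * ((1 - eps) * T - G) by apply: mulr_ge0; [apply: mulr_ge0|]; lra.
  have h3 : 0 < rho * (1 - eps) * (gamma - T * K) by apply: mulr_gt0; [apply: mulr_gt0|]; lra.
  nra.
rewrite prob_eq (prod_zero (j:=j0)) // mulr0 addr0 big1 ?mulr0 // => l _.
rewrite (prod_zero (j:=s)) ?mulr0 // /sv.
by case: (received par true l s); [exact: hs| exact: h0].
Qed.

End Main.

Theorem mainTheorem8 (R : realType) (I : nat) (rho eps w gamma : R)
  (u : bool -> bool -> nat -> R) (par : 'I_I -> option 'I_I) :
  (2 <= I)%N -> 0 < rho < 1 -> 0 < eps < 1 ->
  inClassP I w gamma u -> 0 < gamma -> - (I.-1%:R * gamma) < w ->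
  (* eps < epsbar, epsbar the unique point of (0,1) with q1 = q2 *)
  (exists epsbar : R, 0 < epsbar < 1 /\ q1 rho epsbar = q2 I epsbar /\
                      eps < epsbar) ->
  info_tree par ->
  let p := gamma / (w + gamma * I%:R) in
  let val := if p <= q1 rho eps then 1
             else if p <= q2 I eps then rho * (1 - eps) ^+ I else 0 in
  (exists sigma : strategy R I,
      is_BNE rho eps par u sigma /\ prob_all1 rho eps par sigma = val) /\
  (forall sigma : strategy R I,
      is_BNE rho eps par u sigma -> prob_all1 rho eps par sigma <= val).
Proof.
move=> hI hrho heps hu hg hw _ ht p val; rewrite /val /p.
case: ifP => h1.
  split; first exact: (exist1 par hu heps hrho hg hw hI h1).
  by move=> sig hb; apply: (up1 heps hrho hb).
have n1 := negbT h1.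
case: ifP => h2.
  split; first exact: (exist2 par hu heps hrho hg hw hI n1 h2).
  move=> sig hb; apply: (up2 heps hrho hg hw hI hb).
  exact: (allfalse hu heps hrho hg hw hI ht n1 hb).
have n2 := negbT h2.
split; first exact: (exist3 par hu heps hrho hg hw hI).
move=> sig hb; apply: (up3 hu heps hrho hg hw hI ht n2 hb).
exact: (allfalse hu heps hrho hg hw hI ht n1 hb).
Qed.
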